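(* $P_{x,1}(H)=ky+k(x-1)$, and $P_{x^m,1}(H)=k(x^m-1)$ for every integer $m\neq1$.
   Context: Let $k$ be a field and $0\neq q\in k$ not a root of unity. $H=k_q[x,x^{-1},y]$ is the $k$-algebra generated by $x,x^{-1},y$ with $xx^{-1}=x^{-1}x=1$, $yx=qxy$, a Hopf algebra with $\Delta(x)=x\otimes x$, $\Delta(x^{-1})=x^{-1}\otimes x^{-1}$, $\Delta(y)=y\otimes x+1\otimes y$, $\varepsilon(x)=1$, $\varepsilon(y)=0$; $\{x^ny^m:n\in\mathbb{Z},m\in\mathbb{N}\}$ is a $k$-basis. For group-like elements $g,h$ of a coalgebra $C$, $P_{g,h}(C)=\{c\in C:\Delta(c)=c\otimes g+h\otimes c\}$. *)

(* Defs.v *)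
(* The Hopf algebra H = k_q[x,x^{-1},y] is modelled by its
   k-basis {x^n y^m : n in Z, m in N}: an element is a finite formal sum
   (list of (coefficient, (n, m)) terms); two lists denote the same element iff
   all their coefficients agree.  H (x) H has basis the pairs of basis
   elements.  Multiplication uses y^m x^n = q^(m n) x^n y^m (from yx = qxy),
   and Delta is the algebra map determined by
   Delta(x) = x(x)x, Delta(x^-1) = x^-1(x)x^-1, Delta(y) = y(x)x + 1(x)y,
   i.e. Delta(x^n y^m) = Delta(x)^n Delta(y)^m, extended linearly. *)
From HB Require Import structures.
From mathcomp Require Import all_boot all_order all_algebra.
Set Implicit Arguments. Unset Strict Implicit. Unset Printing Implicit Defensive.
Import Order.TTheory GRing.Theory Num.Theory.
Local Open Scope ring_scope.

Section QPlane.
Variable k : fieldType.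

Definition Hel := seq (k * (int * nat)).
Definition HHel := seq (k * ((int * nat) * (int * nat))).

Definition coefH (u : Hel) (p : int * nat) : k :=
  \sum_(t <- u | t.2 == p) t.1.
Definition coefHH (U : HHel) (pp : (int * nat) * (int * nat)) : k :=
  \sum_(t <- U | t.2 == pp) t.1.

Definition eqH (u v : Hel) : Prop := forall p, coefH u p = coefH v p.

Definition Hscale (a : k) (u : Hel) : Hel := [seq (a * t.1, t.2) | t <- u].
Definition Hadd (u v : Hel) : Hel := u ++ v.
Definition Hsub (u v : Hel) : Hel := u ++ Hscale (-1) v.

Definition Hbasis (n : int) (m : nat) : Hel := [:: (1, (n, m))].
Definition H1 : Hel := Hbasis 0 0.
Definition Hx : Hel := Hbasis 1 0.
Definition Hy : Hel := Hbasis 0 1.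
Definition Hxz (m : int) : Hel := Hbasis m 0.

Variable q : k.

Definition bmul (p r : int * nat) : k * (int * nat) :=
  (q ^ (p.2%:Z * r.1), (p.1 + r.1, (p.2 + r.2)%N)).

Definition HHmul (U V : HHel) : HHel :=
  [seq (t.1 * s.1 * (bmul t.2.1 s.2.1).1 * (bmul t.2.2 s.2.2).1,
        ((bmul t.2.1 s.2.1).2, (bmul t.2.2 s.2.2).2)) | t <- U, s <- V].

Definition HH1 : HHel := [:: (1, ((0, 0%N), (0, 0%N)))].
Definition Dx : HHel := [:: (1, ((1, 0%N), (1, 0%N)))].
Definition Dxinv : HHel := [:: (1, ((-1, 0%N), (-1, 0%N)))].
Definition Dy : HHel := [:: (1, ((0, 1%N), (1, 0%N))); (1, ((0, 0%N), (0, 1%N)))].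

Definition HHpow (X : HHel) (n : nat) : HHel := iter n (HHmul X) HH1.
Definition Dxz (n : int) : HHel :=
  match n with Posz n => HHpow Dx n | Negz n => HHpow Dxinv n.+1 end.

Definition Delta (u : Hel) : HHel :=
  flatten [seq [seq (t.1 * s.1, s.2) | s <- HHmul (Dxz t.2.1) (HHpow Dy t.2.2)]
          | t <- u].

Definition Htensor (u v : Hel) : HHel :=
  [seq (t.1 * s.1, (t.2, s.2)) | t <- u, s <- v].

(* c \in P_{g,h}(H) :  Delta(c) = c (x) g + h (x) c *)
Definition skew_prim (g h c : Hel) : Prop :=
  forall pp, coefHH (Delta c) pp = coefHH (Htensor c g ++ Htensor h c) pp.

End QPlane.

(* Main.v *)
Require Import Defs.
From HB Require Import structures.
From mathcomp Require Import all_boot all_order all_algebra.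
From mathcomp Require Import zify ring.
Import Order.TTheory GRing.Theory Num.Theory.
Local Open Scope ring_scope.

Section S.
Variable k : fieldType.
Variable q : k.
Notation K := ((int * nat) * (int * nat))%type.

Lemma coefHH_cat (U V : HHel k) pp : coefHH (U ++ V) pp = coefHH U pp + coefHH V pp.
Proof. by rewrite /coefHH big_cat. Qed.

Lemma coefHH_nil pp : coefHH ([::] : HHel k) pp = 0.
Proof. by rewrite /coefHH big_nil. Qed.

Lemma coefHH_map (U : HHel k) (g : k * K -> k * K) (w : K -> k) (phi : K -> K) :
  (forall s, g s = (s.1 * w s.2, phi s.2)) -> injective phi -> forall x,
  coefHH (map g U) (phi x) = coefHH U x * w x.
Proof.
move=> Hg Hi x; rewrite /coefHH big_map mulr_suml.
rewrite (eq_bigl (fun s => s.2 == x)); last by move=> s /=; rewrite Hg /= inj_eq.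
by apply: eq_bigr => s /eqP Hs; rewrite Hg /= Hs.
Qed.

Lemma coefHH_map0 (U : HHel k) (g : k * K -> k * K) (phi : K -> K) pp :
  (forall s, (g s).2 = phi s.2) -> (forall y, phi y != pp) ->
  coefHH (map g U) pp = 0.
Proof.
move=> Hg Hn; rewrite /coefHH big_map big_pred0 // => s; rewrite Hg; exact: negbTE.
Qed.

Fixpoint B (m j : nat) : k :=
  match m with
  | 0 => (j == 0)%:R
  | m'.+1 => (match j with 0 => 0 | j'.+1 => B m' j' end) + q ^+ j * B m' j
  end.

Lemma B_gt m j : (m < j)%N -> B m j = 0.
Proof.
elim: m j => [|m IH] [|j] //= Hj.
rewrite IH // IH ?mulr0 ?addr0 //; lia.
Qed.

Lemma B0 m : B m 0 = 1.
Proof. by elim: m => [|m IH] //=; rewrite IH expr0 mulr1 add0r. Qed.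

Lemma B1 m : (1 - q) * B m 1 = 1 - q ^+ m.
Proof.
elim: m => [|m IH] /=; first by rewrite mulr0 expr0 subrr.
rewrite B0 expr1 mulrDr mulr1 mulrCA IH exprS; ring.
Qed.

Lemma qz0 (x : int) : q ^ (0%Z * x) = 1. Proof. by rewrite mul0r expr0z. Qed.
Lemma qz1 (x : int) : q ^ (1%Z * x) = q ^ x. Proof. by rewrite mul1r. Qed.

Lemma intP1 (a : int) (j : nat) : (a - 1 == j%:Z) = (a == j.+1%:Z).
Proof. by apply/eqP/eqP; lia. Qed.

Lemma Dy_coef m a j a2 l :
  coefHH (HHpow q (Dy k) m) ((a, j), (a2, l)) =
  ((a == 0) && (a2 == j%:Z) && (m == j + l)%N)%:R * B m j.
Proof.
elim: m a j a2 l => [|m IH] a j a2 l.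
  rewrite /HHpow /= /HH1 /coefHH big_cons big_nil /= addr0 !xpair_eqE.
  case: j l => [|j] [|l] /=; rewrite ?andbF ?mulr0 ?mulr1 //.
  by rewrite (eq_sym 0 a) (eq_sym 0 a2); case: (a == 0); case: (a2 == 0).
rewrite /HHpow /= -/(HHpow q (Dy k) m) /HHmul /= -/(HHmul q) /= !coefHH_cat coefHH_nil addr0.
set V := HHpow q (Dy k) m.
pose phi1 (x : K) : K := (0 + x.1.1, (1 + x.1.2)%N, (1 + x.2.1, (0 + x.2.2)%N)).
pose w1 (x : K) : k := q ^ (1%Z * x.1.1) * q ^ (0%Z * x.2.1).
pose phi2 (x : K) : K := (0 + x.1.1, (0 + x.1.2)%N, (0 + x.2.1, (1 + x.2.2)%N)).
pose w2 (x : K) : k := q ^ (0%Z * x.1.1) * q ^ (1%Z * x.2.1).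
have i1 : injective phi1.
  move=> [[a1 b1] [c1 d1]] [[a3 b3] [c3 d3]] /= [] e1 e2 e3 e4.
  by congr ((_,_),(_,_)); lia.
have i2 : injective phi2.
  move=> [[a1 b1] [c1 d1]] [[a3 b3] [c3 d3]] /= [] e1 e2 e3 e4.
  by congr ((_,_),(_,_)); lia.
set L1 := [seq _ | s <- V]; set L2 := [seq _ | s <- V].
have h1 : forall x, coefHH L1 (phi1 x) = coefHH V x * w1 x.
  by apply: coefHH_map => // s; rewrite /w1 /phi1 mul1r !mulrA.
have h2 : forall x, coefHH L2 (phi2 x) = coefHH V x * w2 x.
  by apply: coefHH_map => // s; rewrite /w2 /phi2 mul1r !mulrA.
have z1 : forall a a2 l, coefHH L1 (a, 0%N, (a2, l)) = 0.
  move=> ? ? ?; apply: (@coefHH_map0 _ _ phi1) => // -[[? ?] [? ?]].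
  by rewrite /phi1 !xpair_eqE /= !andbF.
have z2 : forall a j a2, coefHH L2 (a, j, (a2, 0%N)) = 0.
  move=> ? ? ?; apply: (@coefHH_map0 _ _ phi2) => // -[[? ?] [? ?]].
  by rewrite /phi2 !xpair_eqE /= !andbF.
case: j => [|j]; case: l => [|l].
- by rewrite z1 z2 addr0 andbF mul0r.
- rewrite z1 add0r (_ : (a, 0%N, (a2, l.+1)) = phi2 (a, 0%N, (a2, l))); last first.
    by rewrite /phi2 /=; congr ((_,_),(_,_)); lia.
  rewrite h2 IH /w2 /=.
  rewrite add0n eqSS; case: eqP => [->|_]; last by rewrite /= !mul0r.
  case: eqP => [->|_]; last by rewrite /= !mul0r.
  by rewrite !mulr0 !expr0z !mulr1 expr0 mul1r add0r.
- rewrite z2 addr0 (_ : (a, j.+1, (a2, 0%N)) = phi1 (a, j, (a2 - 1, 0%N))); last first.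
    by rewrite /phi1 /=; congr ((_,_),(_,_)); lia.
  rewrite h1 IH /w1 /= intP1 addn0 addn0 eqSS.
  case: eqP => [->|_]; last by rewrite /= !mul0r.
  case: eqP => [->|_]; last by rewrite /= !mul0r.
  case: eqP => [->|_]; last by rewrite /= !mul0r.
  by rewrite (@B_gt j j.+1 (ltnSn j)) !mulr0 !expr0z !mulr1 addr0.
- rewrite {1}(_ : (a, j.+1, (a2, l.+1)) = phi1 (a, j, (a2 - 1, l.+1))); last first.
    by rewrite /phi1 /=; congr ((_,_),(_,_)); lia.
  rewrite h1 IH.
  rewrite (_ : (a, j.+1, (a2, l.+1)) = phi2 (a, j.+1, (a2, l))); last first.
    by rewrite /phi2 /=; congr ((_,_),(_,_)); lia.
  rewrite h2 IH intP1 !addnS !addSn eqSS /w1 /w2 /=.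
  case: eqP => [->|_]; last by rewrite /= !mul0r add0r.
  case: eqP => [->|_]; last by rewrite /= !mul0r add0r.
  case: eqP => [->|_]; last by rewrite /= !mul0r add0r.
  rewrite /= !mul1r ?qz0 ?qz1 ?expr0z ?mulr1 ?mul1r; congr (_ + _); by rewrite mulrC.
Qed.

Lemma HHpow_Dx n : HHpow q (Dx k) n = [:: (1, ((n%:Z, 0%N), (n%:Z, 0%N)))].
Proof.
elim: n => [|n IH] //=; rewrite -/(HHpow q (Dx k) n) IH /HHmul /= !qz0 !mulr1.
by congr [:: (_, ((_, _), (_, _)))]; lia.
Qed.

Lemma HHpow_Dxinv n : HHpow q (Dxinv k) n = [:: (1, ((- n%:Z, 0%N), (- n%:Z, 0%N)))].
Proof.
elim: n => [|n IH] //=; rewrite -/(HHpow q (Dxinv k) n) IH /HHmul /= !qz0 !mulr1.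
by congr [:: (_, ((_, _), (_, _)))]; lia.
Qed.

Lemma Dxz_eq n : Dxz q n = [:: (1, ((n, 0%N), (n, 0%N)))].
Proof.
case: n => n /=; first exact: HHpow_Dx.
rewrite HHpow_Dxinv /HHmul /= !qz0 !mulr1 NegzE; congr [:: (_, ((_, _), (_, _)))]; lia.
Qed.

Definition DD (p : int * nat) (pp : K) : k :=
  coefHH (HHmul q (Dxz q p.1) (HHpow q (Dy k) p.2)) pp.

Lemma DD_coef n m a j a2 l :
  DD (n, m) ((a, j), (a2, l)) =
  ((a == n) && (a2 == n + j%:Z) && (m == j + l)%N)%:R * B m j.
Proof.
rewrite /DD /= Dxz_eq /HHmul /= coefHH_cat coefHH_nil addr0.
set V := HHpow q (Dy k) m.
pose phi3 (x : K) : K := (n + x.1.1, (0 + x.1.2)%N, (n + x.2.1, (0 + x.2.2)%N)).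
have i3 : injective phi3.
  move=> [[a1 b1] [c1 d1]] [[a3 b3] [c3 d3]] /= [] e1 e2 e3 e4.
  by congr ((_,_),(_,_)); lia.
rewrite (_ : (a, j, (a2, l)) = phi3 (a - n, j, (a2 - n, l))); last first.
  by rewrite /phi3 /=; congr ((_,_),(_,_)); lia.
rewrite (@coefHH_map V _ (fun _ => 1) phi3); last first.
- exact: i3.
- by move=> s; rewrite /phi3 mul1r !qz0 !mulr1.
rewrite mulr1 /V Dy_coef subr_eq0 subr_eq addrC.
by [].
Qed.

Definition Gf (M : int) (p : int * nat) (pp : K) : k :=
  DD p pp - (((p, (M, 0%N)) == pp)%:R + (((0, 0%N), p) == pp)%:R).

Lemma coefHH_Delta (c : Hel k) pp :
  coefHH (Delta q c) pp = \sum_(t <- c) t.1 * DD t.2 pp.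
Proof.
rewrite /Delta /coefHH big_flatten big_map; apply: eq_bigr => t _.
by rewrite big_map /= mulr_sumr.
Qed.

Lemma coefHH_tens1 (c : Hel k) M pp :
  coefHH (Htensor c (Hxz k M)) pp = \sum_(t <- c) t.1 * ((t.2, (M, 0%N)) == pp)%:R.
Proof.
rewrite /Htensor /coefHH big_flatten big_map; apply: eq_bigr => t _.
rewrite big_cons big_nil /= addr0; case: eqP => _; by rewrite ?mulr1 ?mulr0.
Qed.

Lemma coefHH_tens2 (c : Hel k) pp :
  coefHH (Htensor (H1 k) c) pp = \sum_(t <- c) t.1 * (((0, 0%N), t.2) == pp)%:R.
Proof.
rewrite /Htensor /coefHH /= big_cat big_nil /= big_map big_mkcond; rewrite [X in X + _ = _]/= (addrC _ 0) add0r.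
apply: eq_bigr => t _ /=; case: eqP => _; by rewrite ?mulr1 ?mulr0 ?mul1r.
Qed.

Lemma skew_sum M (c : Hel k) :
  skew_prim q (Hxz k M) (H1 k) c <-> forall pp, \sum_(t <- c) t.1 * Gf M t.2 pp = 0.
Proof.
have E : forall pp, \sum_(t <- c) t.1 * Gf M t.2 pp =
   coefHH (Delta q c) pp - coefHH (Htensor c (Hxz k M) ++ Htensor (H1 k) c) pp.
  move=> pp; rewrite coefHH_cat coefHH_Delta coefHH_tens1 coefHH_tens2.
  rewrite -big_split -sumrB; apply: eq_bigr => t _; rewrite /Gf /=; by rewrite mulrBr mulrDr.
split=> H pp; first by rewrite E H subrr.
by apply/eqP; rewrite -subr_eq0 -E H.
Qed.

Lemma sum_ind (c : Hel k) (G : int * nat -> k) p0 kap :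
  (forall p, G p = (p == p0)%:R * kap) ->
  \sum_(t <- c) t.1 * G t.2 = coefH c p0 * kap.
Proof.
move=> HG; rewrite /coefH mulr_suml [RHS]big_mkcond; apply: eq_bigr => t _.
by rewrite HG; case: eqP => _; rewrite ?mul1r ?mul0r ?mulr0.
Qed.

Lemma regroup (c : Hel k) (F : int * nat -> k) (S : seq (int * nat)) :
  uniq S -> (forall t, t \in c -> t.2 \in S) ->
  \sum_(t <- c) t.1 * F t.2 = \sum_(p <- S) coefH c p * F p.
Proof.
move=> uS cS; rewrite /coefH.
under [RHS]eq_bigr do rewrite mulr_suml big_mkcond.
rewrite exchange_big /=; apply: eq_big_seq => t tc.
rewrite -big_mkcond /= -big_filter.
rewrite (eq_filter (a2 := pred1 t.2)); last by move=> p; rewrite /= eq_sym.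
by rewrite filter_pred1_uniq ?cS // big_cons big_nil addr0.
Qed.

Lemma G_y pp : Gf 1 (0, 1%N) pp = 0.
Proof.
case: pp => [[a j] [a2 l]]; rewrite /Gf DD_coef !xpair_eqE.
case: j => [|[|j]]; case: l => [|[|l]] /=; rewrite ?andbF ?andFb /=.
all: rewrite ?[_ == a]eq_sym ?[_ == a2]eq_sym ?addr0 ?add0r ?andbT /=.
all: try by rewrite !mul0r subrr.
all: by rewrite ?expr0 ?mulr0 ?addr0 !mulr1 subrr.
Qed.

Lemma G_x M pp : Gf M (M, 0%N) pp = Gf M (0, 0%N) pp.
Proof.
case: pp => [[a j] [a2 l]]; rewrite /Gf !DD_coef !xpair_eqE.
case: j => [|j]; case: l => [|l] /=; rewrite ?andbF ?andFb //=.
rewrite ?[_ == a]eq_sym ?[_ == a2]eq_sym ?addr0 ?andbT /=.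
by case: (a == M); case: (a2 == M); case: (a == 0); case: (a2 == 0); rewrite /=; ring.
Qed.


Lemma B11 : B 1 1 = 1. Proof. by rewrite /= expr1 mulr0 addr0. Qed.

Arguments B : simpl never.

Lemma G_F2 M n m0 p : Gf M p ((n, 1%N), (n + 1, m0.+1)) = (p == (n, m0.+2))%:R * B m0.+2 1.
Proof.
case: p => n' m'; rewrite /Gf DD_coef !xpair_eqE /= ?andbF ?andbT.
case: (eqVneq n' n) => [->|/negbTE ne]; rewrite ?eqxx /=; last first.
  by rewrite ?ne ?(eq_sym n n') ?ne /= !mul0r addr0 subrr.
by case: eqP => [->|_]; rewrite /= ?mul1r ?mul0r addr0 subr0.
Qed.

Lemma addr0z (x : int) : x + 0%Z = x. Proof. by rewrite addr0. Qed.

Ltac fin := rewrite ?add0n ?addn0 ?addr0z ?eqxx ?andbF ?andbT ?andFb ?andTb /= ?B0 ?B11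
  ?mul0r ?mul1r ?addr0 ?add0r ?subrr ?subr0 ?oppr0.

Lemma G_F1a M n p : Gf M p ((n, 1%N), (n + 1, 0%N)) = (p == (n, 1%N))%:R * (1 - (n + 1 == M)%:R).
Proof.
case: p => n' m'; rewrite /Gf DD_coef !xpair_eqE /= ?andbF ?andbT.
case: (eqVneq n' n) => [->|/negbTE ne]; rewrite ?eqxx /=; last first.
  by rewrite ?ne ?(eq_sym n n') ?ne; fin.
case: m' => [|[|m']]; fin => //.
by rewrite eq_sym.
Qed.

Lemma G_F1b M n p : Gf M p ((n, 0%N), (n, 1%N)) = (p == (n, 1%N))%:R * (1 - (n == 0)%:R).
Proof.
case: p => n' m'; rewrite /Gf DD_coef !xpair_eqE /= ?andbF ?andbT.
case: (eqVneq n' n) => [->|/negbTE ne]; rewrite ?eqxx /=; last first.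
  by rewrite ?ne ?(eq_sym n n') ?ne; fin.
case: m' => [|[|m']]; fin => //.
by rewrite eq_sym.
Qed.

Lemma G_F0 M n p : Gf M p ((n, 0%N), (n, 0%N)) = (p == (n, 0%N))%:R * (1 - (n == M)%:R - (n == 0)%:R).
Proof.
case: p => n' m'; rewrite /Gf DD_coef !xpair_eqE /= ?andbF ?andbT.
case: (eqVneq n' n) => [->|/negbTE ne]; rewrite ?eqxx /=; last first.
  by rewrite ?ne ?(eq_sym n n') ?ne; fin.
case: m' => [|[|m']]; fin => //.
by rewrite [M == _]eq_sym [0 == _]eq_sym opprD addrA.
Qed.

Lemma G_F00 M p : M != 0 -> Gf M p ((0, 0%N), (M, 0%N)) = (p == (0, 0%N))%:R * (-1) + (p == (M, 0%N))%:R * (-1).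
Proof.
move=> M0; case: p => n' m'; rewrite /Gf DD_coef !xpair_eqE /= ?andbF ?andbT.
case: m' => [|m']; fin => //.
case: (eqVneq n' 0) => [->|ne].
  rewrite [0 == M]eq_sym (negbTE M0) /=; ring.
case: (n' == M); rewrite /=; ring.
Qed.

Lemma sum_eqH (c v : Hel k) (F : int * nat -> k) : eqH c v ->
  \sum_(t <- c) t.1 * F t.2 = \sum_(t <- v) t.1 * F t.2.
Proof.
move=> E; set S := undup [seq t.2 | t <- c ++ v].
have uS : uniq S by exact: undup_uniq.
rewrite (@regroup c F S uS) ?(@regroup v F S uS); first by apply: eq_bigr => p _; rewrite E.
- by move=> t tv; rewrite mem_undup map_f // mem_cat tv orbT.
- by move=> t tc; rewrite mem_undup map_f // mem_cat tc.
Qed.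

Lemma sum_ind2 (c : Hel k) (G : int * nat -> k) p0 p1 k0 k1 :
  (forall p, G p = (p == p0)%:R * k0 + (p == p1)%:R * k1) ->
  \sum_(t <- c) t.1 * G t.2 = coefH c p0 * k0 + coefH c p1 * k1.
Proof.
move=> HG; under eq_bigr do rewrite HG mulrDr.
by rewrite big_split /= (@sum_ind c (fun p => (p == p0)%:R * k0) p0 k0) // (@sum_ind c (fun p => (p == p1)%:R * k1) p1 k1).
Qed.

Lemma coefH_v1 a b p : coefH (Hadd (Hscale a (Hy k)) (Hscale b (Hsub (Hx k) (H1 k)))) p =
  a * ((0, 1%N) == p)%:R + b * ((1, 0%N) == p)%:R - b * ((0, 0%N) == p)%:R.
Proof.
rewrite /coefH /= !big_cons big_nil /=.
by case: ((0, 1%N) == p); case: ((1, 0%N) == p); case: ((0, 0%N) == p); rewrite /=; ring.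
Qed.

Lemma coefH_v2 a M p : coefH (Hscale a (Hsub (Hxz k M) (H1 k))) p =
  a * ((M, 0%N) == p)%:R - a * ((0, 0%N) == p)%:R.
Proof.
rewrite /coefH /= !big_cons big_nil /=.
by case: ((M, 0%N) == p); case: ((0, 0%N) == p); rewrite /=; ring.
Qed.
End S.
Lemma n10 : (1 == 0)%N = false. Proof. by []. Qed.
Lemma n01 : (0 == 1)%N = false. Proof. by []. Qed.
Lemma n1S m : (1 == m.+2)%N = false. Proof. by []. Qed.
Lemma n0S m : (0 == m.+1)%N = false. Proof. by []. Qed.
Lemma z01 : (0 == 1 :> int) = false. Proof. by []. Qed.
Lemma z10 : (1 == 0 :> int) = false. Proof. by []. Qed.
Lemma neg_eq (k : fieldType) (x y : k) : x * -1 + y * -1 = 0 -> x = - y.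
Proof. by move/eqP; rewrite -mulrDl mulrN1 oppr_eq0 addr_eq0 => /eqP. Qed.

Theorem lemma2p6 (k : fieldType) (q : k) (hq0 : q != 0)
    (hq : forall n : nat, (0 < n)%N -> q ^+ n != 1) :
  (forall c : Hel k, skew_prim q (Hx k) (H1 k) c <->
     exists a b : k, eqH c (Hadd (Hscale a (Hy k)) (Hscale b (Hsub (Hx k) (H1 k)))))
  /\
  (forall m : int, m != 1 -> forall c : Hel k,
     skew_prim q (Hxz k m) (H1 k) c <->
     exists a : k, eqH c (Hscale a (Hsub (Hxz k m) (H1 k)))).
Proof.
have Bnz : forall m, B _ q m.+1 1 != 0.
  move=> m; apply/eqP => HB; have := B1 _ q m.+1; rewrite HB mulr0 => /eqP.
  by rewrite eq_sym subr_eq0 eq_sym (negbTE (hq m.+1 isT)).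
have facts : forall M (c : Hel k), (forall pp, \sum_(t <- c) t.1 * Gf _ q M t.2 pp = 0) ->
  [/\ forall n m0, coefH c (n, m0.+2) = 0,
      forall n, coefH c (n, 1%N) * (1 - (n + 1 == M)%:R) = 0,
      forall n, coefH c (n, 1%N) * (1 - (n == 0)%:R) = 0,
      forall n, coefH c (n, 0%N) * (1 - (n == M)%:R - (n == 0)%:R) = 0 &
      M != 0 -> coefH c (0, 0%N) * (-1) + coefH c (M, 0%N) * (-1) = 0].
  move=> M c H; split.
  - move=> n m0; have := H ((n, 1%N), (n + 1, m0.+1)).
    rewrite (@sum_ind k c (fun p => Gf _ q M p ((n, 1%N), (n + 1, m0.+1))) _ _ (G_F2 _ q M n m0)).
    by move/eqP; rewrite mulf_eq0 (negbTE (Bnz m0.+1)) orbF => /eqP.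
  - move=> n; have := H ((n, 1%N), (n + 1, 0%N)).
    by rewrite (@sum_ind k c (fun p => Gf _ q M p ((n, 1%N), (n + 1, 0%N))) _ _ (G_F1a _ q M n)).
  - move=> n; have := H ((n, 0%N), (n, 1%N)).
    by rewrite (@sum_ind k c (fun p => Gf _ q M p ((n, 0%N), (n, 1%N))) _ _ (G_F1b _ q M n)).
  - move=> n; have := H ((n, 0%N), (n, 0%N)).
    by rewrite (@sum_ind k c (fun p => Gf _ q M p ((n, 0%N), (n, 0%N))) _ _ (G_F0 _ q M n)).
  - move=> M0; have := H ((0, 0%N), (M, 0%N)).
    by rewrite (@sum_ind2 k c (fun p => Gf _ q M p ((0, 0%N), (M, 0%N))) _ _ _ _ (fun p => G_F00 _ q M p M0)).
split.
- move=> c; rewrite -[Hx k]/(Hxz k 1) skew_sum; split.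
  + move=> H; case: (facts 1 c H) => F2 F1a F1b F0 F00.
    exists (coefH c (0, 1%N)), (coefH c (1, 0%N)) => -[n [|[|m0]]]; rewrite coefH_v1 !xpair_eqE ?eqxx ?n10 ?n01 ?n1S ?n0S ?andbT ?andbF /=.
    * case: (eqVneq n 1) => [->|n1].
        by rewrite ?eqxx ?z01 /= ?mulr0 ?mulr1 ?add0r ?subr0 ?mulr0 ?mulr1 ?addr0 ?add0r ?subr0 ?sub0r ?subrr ?oppr0.
      case: (eqVneq n 0) => [->|n0].
        by rewrite ?z10 (@neg_eq _ _ _ (F00 isT)) /= ?mulr0 ?mulr1 ?add0r ?sub0r ?mulr0 ?mulr1 ?addr0 ?add0r ?subr0 ?sub0r ?subrr ?oppr0.
      have := F0 n; rewrite (negbTE n1) (negbTE n0) /= !subr0 mulr1 => ->.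
      by rewrite ?[_ == n]eq_sym ?(negbTE n1) ?(negbTE n0) /= ?mulr0 ?subrr ?addr0 ?mulr0 ?mulr1 ?addr0 ?add0r ?subr0 ?sub0r ?subrr ?oppr0.
    * case: (eqVneq n 0) => [->|n0].
        by rewrite ?eqxx /= ?mulr0 ?mulr1 ?subrr ?addr0 ?subr0 ?mulr0 ?mulr1 ?addr0 ?add0r ?subr0 ?sub0r ?subrr ?oppr0.
      have := F1b n; rewrite (negbTE n0) /= !subr0 mulr1 => ->.
      by rewrite ?[_ == n]eq_sym ?(negbTE n0) /= ?mulr0 ?subrr ?addr0 ?mulr0 ?mulr1 ?addr0 ?add0r ?subr0 ?sub0r ?subrr ?oppr0.
    * by rewrite F2 /= ?mulr0 ?mulr1 ?addr0 ?add0r ?subr0 ?sub0r ?subrr ?oppr0.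
  + move=> [a [b E]] pp.
    rewrite (@sum_eqH _ _ _ (fun p => Gf _ q 1 p pp) E) /= !big_cons big_nil /=.
    rewrite G_y (G_x _ q 1); ring.
- move=> M M1 c; rewrite skew_sum; split.
  + move=> H; case: (facts M c H) => F2 F1a F1b F0 F00.
    exists (coefH c (M, 0%N)) => -[n [|[|m0]]]; rewrite coefH_v2 !xpair_eqE ?eqxx ?n10 ?n01 ?n1S ?n0S ?andbT ?andbF /=.
    * case: (eqVneq M 0) => [M0|M0].
        move: F0; rewrite M0 => F0'.
        case: (eqVneq n 0) => [->|n0].
          have := F0' 0; rewrite eqxx /= => /eqP; rewrite mulf_eq0 => /orP [/eqP -> |].
            by rewrite ?subrr ?mulr0 ?mulr1 ?addr0 ?add0r ?subr0 ?sub0r ?subrr ?oppr0.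
          by rewrite ?subrr ?sub0r ?oppr_eq0 ?oner_eq0 ?mulr0 ?mulr1 ?addr0 ?add0r ?subr0 ?sub0r ?subrr ?oppr0.
        have := F0' n; rewrite (negbTE n0) /= !subr0 mulr1 => ->.
        by rewrite ?[_ == n]eq_sym ?(negbTE n0) /= ?mulr0 ?subrr ?mulr0 ?mulr1 ?addr0 ?add0r ?subr0 ?sub0r ?subrr ?oppr0.
      case: (eqVneq n M) => [->|nM].
        by rewrite ?eqxx ?[_ == M]eq_sym ?(negbTE M0) /= ?mulr1 ?mulr0 ?subr0 ?mulr0 ?mulr1 ?addr0 ?add0r ?subr0 ?sub0r ?subrr ?oppr0.
      case: (eqVneq n 0) => [->|n0].
        by rewrite (@neg_eq _ _ _ (F00 M0)) ?(negbTE M0) ?eqxx /= ?mulr0 ?mulr1 ?sub0r ?mulr0 ?mulr1 ?addr0 ?add0r ?subr0 ?sub0r ?subrr ?oppr0.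
      have := F0 n; rewrite (negbTE nM) (negbTE n0) /= !subr0 mulr1 => ->.
      by rewrite ?[_ == n]eq_sym ?(negbTE nM) ?(negbTE n0) /= ?mulr0 ?subrr ?mulr0 ?mulr1 ?addr0 ?add0r ?subr0 ?sub0r ?subrr ?oppr0.
    * case: (eqVneq n 0) => [->|n0].
        have := F1a 0; rewrite add0r eq_sym (negbTE M1) /= subr0 mulr1 => ->.
        by rewrite !mulr0 ?subrr ?mulr0 ?mulr1 ?addr0 ?add0r ?subr0 ?sub0r ?subrr ?oppr0.
      have := F1b n; rewrite (negbTE n0) /= !subr0 mulr1 => ->.
      by rewrite !mulr0 ?subrr ?mulr0 ?mulr1 ?addr0 ?add0r ?subr0 ?sub0r ?subrr ?oppr0.
    * by rewrite F2 /= ?mulr0 ?mulr1 ?addr0 ?add0r ?subr0 ?sub0r ?subrr ?oppr0.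
  + move=> [a E] pp.
    rewrite (@sum_eqH _ _ _ (fun p => Gf _ q M p pp) E) /= !big_cons big_nil /=.
    rewrite (G_x _ q M); ring.
Qed.
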